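(* Let $\lambda,\mu$ be partitions and $x$ an indeterminate. Put $$X_{\lambda\mu}(x):=\prod_{(i,j)\in[\mu]}(j-i-x)\prod_{(i,j)\in [\lambda]}\biggl((j-i-\mu_1+x)\prod_{1\le k\le\mu_1}\frac{j-i+\bar{\mu}_k-k+1+x}{j-i+\bar{\mu}_k-k+x}\biggr)$$ and $$Z_{\lambda\mu}(x):=\prod_{(i,j) \in [\lambda]}(h_{i,j}^{\lambda,\mu}+x)\prod_{(i,j) \in [\mu]}(h_{i,j}^{\mu,\lambda}-x).$$ Then $X_{\lambda\mu}(x)=Z_{\lambda\mu}(x)$.
   Context: For a partition $\lambda$, $[\lambda]=\{(i,j): i\ge1,\ 1\le j\le\lambda_i\}$ is its diagram and $\bar\lambda$ is the conjugate partition ($\bar\lambda_k$ = number of $i$ with $\lambda_i\ge k$). For partitions $\lambda,\mu$ and a node $(i,j)\in[\lambda]$, the generalized hook length is $h^{\lambda,\mu}_{i,j}=\lambda_i-i+\bar\mu_j-j+1$. *)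

(* Defs.v *)
From HB Require Import structures.
From mathcomp Require Import all_boot all_order all_algebra fraction.
Set Implicit Arguments. Unset Strict Implicit. Unset Printing Implicit Defensive.
Import Order.TTheory GRing.Theory Num.Theory.
Local Open Scope ring_scope.

(* A partition is a weakly decreasing finite sequence of naturals
   (zero parts are harmless: they contribute no nodes). *)
Definition is_partition (l : seq nat) : bool := sorted geq l.

(* lambda_i, 1-indexed; 0 for i beyond the length *)
Definition part (l : seq nat) (i : nat) : nat := nth 0%N l i.-1.

Definition conjp (l : seq nat) (k : nat) : nat := count (fun a => (k <= a)%N) l.

Definition prod_diag (F : fieldType) (l : seq nat) (f : nat -> nat -> F) : F :=
  \prod_(1 <= i < (size l).+1) \prod_(1 <= j < (part l i).+1) f i j.

Definition ghook (F : fieldType) (l m : seq nat) (i j : nat) : F :=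
  (part l i)%:R - i%:R + (conjp m j)%:R - j%:R + 1.

Definition Xlm (F : fieldType) (l m : seq nat) (x : F) : F :=
  prod_diag m (fun i j => j%:R - i%:R - x) *
  prod_diag l (fun i j =>
    (j%:R - i%:R - (part m 1)%:R + x) *
    \prod_(1 <= k < (part m 1).+1)
      ((j%:R - i%:R + (conjp m k)%:R - k%:R + 1 + x) /
       (j%:R - i%:R + (conjp m k)%:R - k%:R + x))).

Definition Zlm (F : fieldType) (l m : seq nat) (x : F) : F :=
  prod_diag l (fun i j => ghook F l m i j + x) *
  prod_diag m (fun i j => ghook F m l i j - x).

Definition ratfun := {fraction {poly rat}}.
Definition xind : ratfun := @FracField.tofrac {poly rat} 'X.

(* Main.v *)
Require Import Defs.
From HB Require Import structures.
From mathcomp Require Import all_boot all_order all_algebra fraction.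
From mathcomp Require Import ring.
Set Implicit Arguments. Unset Strict Implicit. Unset Printing Implicit Defensive.
Local Open Scope ring_scope.
Import GRing.Theory.

Definition gen (F : fieldType) (x : F) := forall p q : nat, x + (p%:R - q%:R) != 0.

Lemma nz (F : fieldType) (x y : F) p q : gen x -> y = x + (p%:R - q%:R) -> y != 0.
Proof. by move=> hx ->. Qed.

Lemma gen_add (F : fieldType) (x : F) p q : gen x -> gen (x + (p%:R - q%:R)).
Proof.
move=> hx p' q'.
suff -> : x + (p%:R - q%:R) + (p'%:R - q'%:R) = x + ((p+p')%:R - (q+q')%:R) by apply: hx.
ring.
Qed.

Lemma part_cons a l i : (0 < i)%N -> part (a :: l) i.+1 = part l i.
Proof. by case: i. Qed.

Lemma conjp_cons a l k : conjp (a::l) k = ((k <= a)%N + conjp l k)%N.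
Proof. by []. Qed.

Lemma sorted_le_head a l : sorted geq (a::l) -> all (fun b => b <= a)%N (a::l).
Proof.
move=> H /=; rewrite leqnn /=.
have Ht : transitive geq by move=> u v w h1 h2; exact: leq_trans h2 h1.
exact: (order_path_min Ht H).
Qed.

Lemma part_le l i : sorted geq l -> (part l i <= part l 1)%N.
Proof.
case: l => [|a l]; first by rewrite /part nth_nil.
move=> H; have /allP Hall := sorted_le_head H.
rewrite /part /=. case: (ltnP i.-1 (size (a::l))) => Hi.
  by apply: Hall; exact: mem_nth.
by rewrite nth_default.
Qed.

Lemma conjp0 l k : sorted geq l -> (part l 1 < k)%N -> conjp l k = 0%N.
Proof.
rewrite /conjp; case: l => [|a l] // H Hk.
have /allP Hall := sorted_le_head H.
apply/eqP; rewrite -leqn0 leqNgt -has_count; apply/hasPn => b /Hall /= Hb.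
by rewrite -ltnNge (leq_ltn_trans Hb).
Qed.

Lemma prod_diag_nil (F : fieldType) f : prod_diag (F:=F) [::] f = 1.
Proof. by rewrite /prod_diag big_geq. Qed.

Lemma prod_diag_cons (F : fieldType) a l (f : nat -> nat -> F) :
  prod_diag (a::l) f = (\prod_(1 <= j < a.+1) f 1%N j) * prod_diag l (fun i j => f i.+1 j).
Proof.
rewrite /prod_diag /= big_ltn //; congr (_ * _).
rewrite big_add1 /=; apply: eq_big_nat => i /andP [Hi _]. by rewrite part_cons.
Qed.

Lemma eq_prod_diag (F : fieldType) l (f g : nat -> nat -> F) :
  (forall i j, (0 < i <= size l)%N -> (0 < j <= part l i)%N -> f i j = g i j) ->
  prod_diag l f = prod_diag l g.
Proof.
move=> H; apply: eq_big_nat => i /andP[Hi1 Hi2]; apply: eq_big_nat => j /andP[Hj1 Hj2].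
by apply: H; apply/andP; split => //; rewrite -ltnS.
Qed.

Lemma prod_diag_mul (F : fieldType) l (f g : nat -> nat -> F) :
  prod_diag l (fun i j => f i j * g i j) = prod_diag l f * prod_diag l g.
Proof. rewrite /prod_diag -big_split; apply: eq_bigr => i _; exact: big_split. Qed.

Lemma prod_diag_conj (F : fieldType) m (f : nat -> nat -> F) : sorted geq m ->
  prod_diag m f = \prod_(1 <= j < (part m 1).+1) \prod_(1 <= i < (conjp m j).+1) f i j.
Proof.
elim: m f => [|b m IH] f Hs.
  by rewrite prod_diag_nil /part /= big_geq.
have Hs' : sorted geq m := path_sorted Hs.
have Hb : (part m 1 <= b)%N by exact: (part_le 2 Hs).
rewrite prod_diag_cons IH //.
have -> : part (b :: m) 1 = b by [].
have -> : \prod_(1 <= j < b.+1) \prod_(1 <= i < (conjp (b :: m) j).+1) f i j =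
  \prod_(1 <= j < b.+1) (f 1%N j * \prod_(1 <= i < (conjp m j).+1) f i.+1 j).
  apply: eq_big_nat => j /andP[_ Hj]; rewrite ltnS in Hj.
  by rewrite conjp_cons Hj /= big_ltn // big_add1.
rewrite big_split /=; congr (_ * _).
rewrite [RHS](big_cat_nat (n := (part m 1).+1)) //=.
rewrite [X in _ = _ * X]big_nat_cond [X in _ = _ * X]big1 ?mulr1 //.
move=> j /andP[/andP[Hj _] _]; by rewrite conjp0 // big_geq.
Qed.

Lemma tele (F : fieldType) (f : nat -> F) p q : (p <= q)%N ->
  (forall k, (p <= k <= q)%N -> f k != 0) ->
  \prod_(p <= k < q) (f k.+1 / f k) = f q / f p.
Proof.
elim: q => [|q IH] Hpq Hf.
  by move: Hpq Hf; rewrite leqn0 => /eqP -> Hf; rewrite big_geq // divff // Hf.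
move: Hpq; rewrite leq_eqVlt => /orP [/eqP Ep | Hpq].
  by rewrite -Ep big_geq // divff // Hf // Ep leqnn.
rewrite ltnS in Hpq.
rewrite big_nat_recr //= IH //; last first.
  by move=> k /andP[H1 H2]; apply: Hf; rewrite H1 /= (leq_trans H2).
rewrite mulrC mulrA divfK //; apply: Hf; by rewrite Hpq /=.
Qed.

Lemma tele2 (F : fieldType) (g : nat -> F) p q : (p <= q)%N ->
  (forall k, (p <= k <= q)%N -> g k != 0) ->
  \prod_(p <= k < q) (g k / g k.+1) = g p / g q.
Proof.
elim: q => [|q IH] Hpq Hf.
  by move: Hpq Hf; rewrite leqn0 => /eqP -> Hf; rewrite big_geq // divff // Hf.
move: Hpq; rewrite leq_eqVlt => /orP [/eqP Ep | Hpq].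
  by rewrite -Ep big_geq // divff // Hf // Ep leqnn.
rewrite ltnS in Hpq.
rewrite big_nat_recr //= IH //; last first.
  by move=> k /andP[H1 H2]; apply: Hf; rewrite H1 /= (leq_trans H2).
have Hq : g q != 0 by apply: Hf; rewrite Hpq /=.
field; rewrite Hq Hf // leqnn andbT; exact: leqW.
Qed.

Definition G (F : fieldType) m (y : F) : F :=
  (y - (part m 1)%:R) * \prod_(1 <= k < (part m 1).+1)
     ((y + (conjp m k)%:R - k%:R + 1) / (y + (conjp m k)%:R - k%:R)).
Definition Am (F : fieldType) m (x : F) := prod_diag m (fun i j => j%:R - i%:R - x).

Lemma X_G (F : fieldType) l m (x : F) :
  Xlm l m x = Am m x * prod_diag l (fun i j => G m (j%:R - i%:R + x)).
Proof.
rewrite /Xlm /Am; congr (_ * _); apply: eq_prod_diag => i j _ _; rewrite /G.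
congr (_ * _); first ring. apply: eq_bigr => k _; congr (_ / _); ring.
Qed.

Lemma col1 (F : fieldType) (x : F) (k nu : nat) :
  (\prod_(1 <= i < nu.+1) (k%:R - i%:R - x)) * (x - k%:R) =
  (\prod_(1 <= i < nu.+1) (k%:R - i%:R - (x - 1))) * (x + nu%:R - k%:R).
Proof.
elim: nu => [|n IH]; first by rewrite !big_geq //; ring.
rewrite [in LHS]big_nat_recr //= [in RHS]big_nat_recr //=.
transitivity ((\prod_(1 <= i < n.+1) (k%:R - i%:R - x)) * (x - k%:R) * (k%:R - n.+1%:R - x)); first ring.
rewrite IH; ring.
Qed.

Lemma Am_rel (F : fieldType) (x : F) m : sorted geq m ->
  Am m x * \prod_(1 <= k < (part m 1).+1) (x - k%:R) =
  Am m (x - 1) * \prod_(1 <= k < (part m 1).+1) (x + (conjp m k)%:R - k%:R).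
Proof.
move=> Hs; rewrite /Am !prod_diag_conj // -!big_split; apply: eq_bigr => k _; exact: col1.
Qed.

Lemma splitP (F : fieldType) (x : F) a c : (c <= a)%N ->
  \prod_(1 <= j < a.+1) (j%:R - 1%:R + x - c%:R) =
  \prod_(1 <= k < c.+1) (x - k%:R) * \prod_(c.+1 <= j < a.+1) (a%:R - j%:R + x).
Proof.
move=> Hc.
rewrite (big_cat_nat (n:=c.+1)) //=; congr (_ * _).
  rewrite big_nat_rev /=; apply: eq_big_nat => j /andP[H1 H2].
  rewrite add1n subSS natrB; last exact: ltnW. ring.
rewrite big_nat_rev /=; apply: eq_big_nat => j /andP[H1 H2].
rewrite addnS subSS natrB; last by rewrite ltnS in H2; rewrite (leq_trans H2) // leq_addl.
ring.
Qed.

Lemma splitR (F : fieldType) (x : F) a m : sorted geq m -> (part m 1 <= a)%N ->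
  \prod_(1 <= j < a.+1) (a%:R + (conjp m j)%:R - j%:R + x) =
  \prod_(1 <= k < (part m 1).+1) (a%:R + (conjp m k)%:R - k%:R + x) *
  \prod_((part m 1).+1 <= j < a.+1) (a%:R - j%:R + x).
Proof.
move=> Hs Ha; rewrite (big_cat_nat (n:=(part m 1).+1)) //=; congr (_*_).
apply: eq_big_nat => j /andP[H1 _]; rewrite conjp0 //; ring.
Qed.

Lemma teleG (F : fieldType) (x : F) a c k : gen x ->
  \prod_(1 <= j < a.+1) ((j%:R - 1%:R + x + c%:R - k%:R + 1) / (j%:R - 1%:R + x + c%:R - k%:R)) =
  (a%:R + c%:R - k%:R + x) / (x + c%:R - k%:R).
Proof.
move=> hx. rewrite big_add1 /=.
rewrite (eq_bigr (fun j => (x + c%:R - k%:R + j.+1%:R) / (x + c%:R - k%:R + j%:R))); last first.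
  move=> j _; congr (_ / _); ring.
rewrite (tele (f := fun j => x + c%:R - k%:R + j%:R)) //=.
  congr (_ / _); ring.
move=> j _; apply: (@nz _ x _ (c + j) k hx); ring.
Qed.

Lemma starL (F : fieldType) (x : F) a m : gen x -> sorted geq m -> (part m 1 <= a)%N ->
  Am m x * \prod_(1 <= j < a.+1) G m (j%:R - 1%:R + x) =
  Am m (x - 1) * \prod_(1 <= j < a.+1) (a%:R + (conjp m j)%:R - j%:R + x).
Proof.
move=> hx Hs Ha.
rewrite /G big_split /= [X in _ * (_ * X)]exchange_big /=.
rewrite (eq_bigr _ (fun k _ => teleG a (conjp m k) k hx)).
rewrite splitP // splitR //.
have E := Am_rel x Hs.
set Pk := \prod_(1 <= k < (part m 1).+1) (x - k%:R) in E *.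
set S := \prod_((part m 1).+1 <= j < a.+1) (a%:R - j%:R + x).
set Rk := \prod_(1 <= k < (part m 1).+1) (a%:R + (conjp m k)%:R - k%:R + x).
set Q := \prod_(1 <= k < (part m 1).+1) _.
set Dk := \prod_(1 <= k < (part m 1).+1) (x + (conjp m k)%:R - k%:R) in E.
have HDQ : Dk * Q = Rk.
  rewrite /Dk /Q /Rk -big_split; apply: eq_bigr => k _ /=; rewrite mulrC divfK //.
  apply: (@nz _ x _ (conjp m k) k hx); ring.
rewrite -HDQ.
transitivity ((Am m x * Pk) * S * Q); first ring.
rewrite E; ring.
Qed.

Lemma XstepL (F : fieldType) (x : F) a l m : gen x -> sorted geq m -> (part m 1 <= a)%N ->
  Xlm (a::l) m x = Xlm l m (x - 1) * \prod_(1 <= j < a.+1) (a%:R + (conjp m j)%:R - j%:R + x).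
Proof.
move=> hx Hs Ha. rewrite !X_G prod_diag_cons mulrA starL //.
rewrite (eq_prod_diag (g := fun i j => G m (j%:R - i%:R + (x - 1)))); first ring.
move=> i j _ _; congr (G m _); ring.
Qed.

Lemma ZstepL (F : fieldType) (x : F) a l m : sorted geq m -> (part m 1 <= a)%N ->
  Zlm (a::l) m x = Zlm l m (x - 1) * \prod_(1 <= j < a.+1) (a%:R + (conjp m j)%:R - j%:R + x).
Proof.
move=> Hs Ha. rewrite /Zlm prod_diag_cons.
have Em : prod_diag m (fun i j => ghook F m (a::l) i j - x) =
          prod_diag m (fun i j => ghook F m l i j - (x - 1)).
  apply: eq_prod_diag => i j _ /andP[_ Hj].
  have Hja : (j <= a)%N := leq_trans Hj (leq_trans (part_le i Hs) Ha).
  rewrite /ghook conjp_cons Hja /=; ring.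
have El : prod_diag l (fun i j => ghook F (a::l) m i.+1 j + x) =
          prod_diag l (fun i j => ghook F l m i j + (x - 1)).
  apply: eq_prod_diag => i j /andP[Hi _] _; rewrite /ghook part_cons //; ring.
rewrite Em El.
have -> : \prod_(1 <= j < a.+1) (ghook F (a::l) m 1 j + x) =
          \prod_(1 <= j < a.+1) (a%:R + (conjp m j)%:R - j%:R + x).
  apply: eq_bigr => j _; rewrite /ghook; have -> : part (a::l) 1 = a by [].
  ring.
ring.
Qed.

Lemma Am_cons (F : fieldType) (x : F) b m :
  Am (b::m) x = \prod_(1 <= j < b.+1) (j%:R - 1%:R - x) * Am m (x + 1).
Proof. rewrite /Am prod_diag_cons; congr (_ * _); apply: eq_prod_diag => i j _ _; ring. Qed.

Lemma G_cons (F : fieldType) (y : F) b m : sorted geq (b::m) -> gen y ->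
  G (b::m) y = G m (y + 1) * ((y - b%:R) / (y + 1 - b%:R)).
Proof.
move=> Hs hy.
have Hs' : sorted geq m := path_sorted Hs.
have Hb : (part m 1 <= b)%N by exact: (part_le 2 Hs).
rewrite /G.
have -> : part (b::m) 1 = b by [].
rewrite (eq_big_nat _ _ (F2 := fun k => ((y+1) + (conjp m k)%:R - k%:R + 1) / ((y+1) + (conjp m k)%:R - k%:R))); last first.
  move=> k /andP[_ Hk]; rewrite ltnS in Hk; rewrite conjp_cons Hk /=; congr (_ / _); ring.
rewrite (big_cat_nat (n := (part m 1).+1)) //=.
rewrite [X in _ * (_ * X)]big_add1 /=.
rewrite [X in _ * (_ * X)](eq_big_nat _ _ (F2 := fun k => (y + 1 - k%:R) / (y + 1 - k.+1%:R))); last first.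
  move=> k /andP[Hk _]; rewrite conjp0 //; congr (_ / _); ring.
rewrite tele2 //; last first.
  move=> k _; apply: (@nz _ y _ 1 k hy); ring.
have hb : y + 1 - b%:R != 0 by apply: (@nz _ y _ 1 b hy); ring.
field; exact: hb.
Qed.

Lemma XstepM (F : fieldType) (x : F) l b m : gen x -> sorted geq (b::m) ->
  Xlm l (b::m) x = Xlm l m (x + 1) * (\prod_(1 <= j < b.+1) (j%:R - 1%:R - x) *
      prod_diag l (fun i j => (j%:R - i%:R + x - b%:R) / (j%:R - i%:R + x + 1 - b%:R))).
Proof.
move=> hx Hs. rewrite !X_G Am_cons.
rewrite (eq_prod_diag (g := fun i j => G m (j%:R - i%:R + (x + 1)) *
   ((j%:R - i%:R + x - b%:R) / (j%:R - i%:R + x + 1 - b%:R)))).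
  rewrite prod_diag_mul; ring.
move=> i j _ _.
have hy : gen (j%:R - i%:R + x) by rewrite addrC; exact: gen_add.
rewrite G_cons //; congr (G m _ * (_ / _)); ring.
Qed.

Lemma telecol (F : fieldType) (x : F) (b j nu : nat) : gen x ->
  \prod_(1 <= i < nu.+1) ((j%:R - i%:R + x - b%:R) / (j%:R - i%:R + x + 1 - b%:R)) =
  (j%:R - nu%:R + x - b%:R) / (j%:R + x - b%:R).
Proof.
move=> hx; rewrite big_add1 /=.
rewrite (eq_bigr (fun i => (j%:R - i.+1%:R + x - b%:R) / (j%:R - i%:R + x - b%:R))); last first.
  move=> i _; congr (_ / _); ring.
rewrite (tele (f := fun i => j%:R - i%:R + x - b%:R)) //=.
  congr (_ / _); ring.
move=> i _; apply: (@nz _ x _ j (i + b) hx); ring.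
Qed.

Lemma star3 (F : fieldType) (x : F) b l : gen x -> sorted geq l -> (part l 1 <= b)%N ->
  \prod_(1 <= j < b.+1) (j%:R - 1%:R - x) *
  prod_diag l (fun i j => (j%:R - i%:R + x - b%:R) / (j%:R - i%:R + x + 1 - b%:R)) =
  \prod_(1 <= j < b.+1) (b%:R + (conjp l j)%:R - j%:R - x).
Proof.
move=> hx Hs Hb.
rewrite prod_diag_conj //.
rewrite (eq_bigr _ (fun j _ => telecol b j (conjp l j) hx)).
have -> : \prod_(1 <= j < b.+1) (j%:R - 1%:R - x) = \prod_(1 <= j < b.+1) (b%:R - j%:R - x).
  rewrite big_nat_rev /=; apply: eq_big_nat => j /andP[H1 H2].
  rewrite add1n subSS natrB; last exact: ltnW. ring.
rewrite [in LHS](big_cat_nat (n := (part l 1).+1)) //=.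
rewrite [in RHS](big_cat_nat (n := (part l 1).+1)) //=.
have Eh : \prod_((part l 1).+1 <= j < b.+1) (b%:R - j%:R - x) =
          \prod_((part l 1).+1 <= j < b.+1) (b%:R + (conjp l j)%:R - j%:R - x).
  apply: eq_big_nat => j /andP[H1 _]; rewrite conjp0 //; ring.
rewrite -Eh.
set Ah := \prod_((part l 1).+1 <= j < b.+1) _.
have El : \prod_(1 <= j < (part l 1).+1) (b%:R - j%:R - x) *
          \prod_(1 <= j < (part l 1).+1) ((j%:R - (conjp l j)%:R + x - b%:R) / (j%:R + x - b%:R)) =
          \prod_(1 <= j < (part l 1).+1) (b%:R + (conjp l j)%:R - j%:R - x).
  rewrite -big_split; apply: eq_bigr => j _ /=.
  have hD : j%:R + x - b%:R != 0 by apply: (@nz _ x _ j b hx); ring.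
  have -> : b%:R - j%:R - x = - (j%:R + x - b%:R) by ring.
  rewrite mulNr mulrC divfK //; ring.
rewrite -El; ring.
Qed.

Lemma ZstepM (F : fieldType) (x : F) l b m : sorted geq l -> (part l 1 <= b)%N ->
  Zlm l (b::m) x = Zlm l m (x + 1) * \prod_(1 <= j < b.+1) (b%:R + (conjp l j)%:R - j%:R - x).
Proof.
move=> Hs Hb. rewrite /Zlm prod_diag_cons.
have El : prod_diag l (fun i j => ghook F l (b::m) i j + x) =
          prod_diag l (fun i j => ghook F l m i j + (x + 1)).
  apply: eq_prod_diag => i j _ /andP[_ Hj].
  have Hjb : (j <= b)%N := leq_trans Hj (leq_trans (part_le i Hs) Hb).
  rewrite /ghook conjp_cons Hjb /=; ring.
have Em : prod_diag m (fun i j => ghook F (b::m) l i.+1 j - x) =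
          prod_diag m (fun i j => ghook F m l i j - (x + 1)).
  apply: eq_prod_diag => i j /andP[Hi _] _; rewrite /ghook part_cons //; ring.
rewrite El Em.
have -> : \prod_(1 <= j < b.+1) (ghook F (b::m) l 1 j - x) =
          \prod_(1 <= j < b.+1) (b%:R + (conjp l j)%:R - j%:R - x).
  apply: eq_bigr => j _; rewrite /ghook; have -> : part (b::m) 1 = b by [].
  ring.
ring.
Qed.

Lemma main (F : fieldType) n : forall (x : F) l m, (size l + size m <= n)%N ->
  gen x -> sorted geq l -> sorted geq m -> Xlm l m x = Zlm l m x.
Proof.
elim: n => [|n IH] x l m Hn hx Hl Hm.
  case: l Hn Hl => [|a l] //; case: m Hm => [|b m] // _ _ _.
  by rewrite /Xlm /Zlm !prod_diag_nil.
have hxm : gen (x - 1) by have := gen_add 0 1 hx; rewrite sub0r.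
have hxp : gen (x + 1) by have := gen_add 1 0 hx; rewrite subr0.
have stepM : forall l b m, (size l + (size m).+1 <= n.+1)%N -> sorted geq l ->
    sorted geq (b::m) -> (part l 1 <= b)%N -> Xlm l (b::m) x = Zlm l (b::m) x.
  move=> l' b m' Hn' Hl' Hm' Hb.
  rewrite XstepM // star3 // ZstepM // (IH _ _ _ _ hxp Hl' (path_sorted Hm')) //.
  by rewrite addnS ltnS in Hn'.
case: l Hn Hl => [|a l] Hn Hl.
  case: m Hm Hn => [|b m] Hm Hn; first by rewrite /Xlm /Zlm !prod_diag_nil.
  by apply: stepM.
case: (leqP (part m 1) a) => Ha.
  rewrite XstepL // ZstepL // (IH _ _ _ _ hxm (path_sorted Hl) Hm) //.
case: m Hm Hn Ha => [|b m] Hm Hn Ha; first by [].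
apply: stepM => //. exact: ltnW.
Qed.

Lemma gen_xind : gen xind.
Proof.
move=> p q.
have -> : (p%:R - q%:R : ratfun) = FracField.tofrac ((p%:R - q%:R)%:P : {poly rat}).
  by rewrite !rmorphB /= !rmorph_nat.
rewrite /xind -tofracD tofrac_eq0 -size_poly_eq0 size_XaddC.
by [].
Qed.

Theorem lemma4p1 (l m : seq nat) :
  is_partition l -> is_partition m ->
  Xlm l m xind = Zlm l m xind.
Proof.
move=> Hl Hm; apply: (@main _ (size l + size m)) => //; exact: gen_xind.
Qed.
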